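(* Let $\tau:\mathbb{F}_p((t))^d\to\mathbb{F}_p((t))^d$, $(f_1,\dots,f_d)\mapsto(tf_1,\dots,tf_d)$, and let $\phi:\mathbb{F}_p((t))\to\mathrm{Aut}(\mathbb{F}_p((t))^d)$ be a continuous homomorphism satisfying $\phi(tf)=\tau\circ\phi(f)\circ\tau^{-1}$ for all $f\in\mathbb{F}_p((t))$. Then there is a compact open subgroup $V\le\mathbb{F}_p((t))^d$ such that $\phi(f)(V)=V$ for every $f\in\mathbb{F}_p[[t]]$ and $\tau(V)$ is a proper subgroup of $V$.
   Context: $\mathbb{F}_p((t))$ is the additive group of formal Laurent series over $\mathbb{F}_p$ with its usual locally compact topology, $\mathbb{F}_p[[t]]$ the compact open subgroup of power series. $\mathrm{Aut}(\mathbb{F}_p((t))^d)$ is the group of automorphisms of the topological group $(\mathbb{F}_p((t))^d,+)$ with the Braconnier topology: the group topology with basis of identity neighbourhoods $\{\alpha:\alpha(x)-x\in U,\ \alpha^{-1}(x)-x\in U\ \forall x\in K\}$, $K$ compact, $U$ an identity neighbourhood. *)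

(* Defs.v *)
From mathcomp Require Import all_boot all_order all_algebra.
From mathcomp Require Import zify.
Set Implicit Arguments. Unset Strict Implicit. Unset Printing Implicit Defensive.
Import Order.TTheory GRing.Theory Num.Theory.
Local Open Scope ring_scope.

Section Laurent.
Variable p : nat.

(* F_p((t)) : coefficient functions int -> F_p with support bounded below;
   the series is  sum_k coef k * t^k. *)
Record laurent := Laurent {
  coef :> int -> 'F_p ;
  coef_lb : exists N : int, forall k : int, k < N -> coef k = 0 }.

Lemma lzero_lb : exists N : int, forall k : int, k < N -> (fun _ : int => (0 : 'F_p)) k = 0.
Proof. by exists 0. Qed.
Definition lzero : laurent := Laurent lzero_lb.

Lemma ladd_lb (f g : laurent) :
  exists N : int, forall k : int, k < N -> (fun k => f k + g k) k = 0.
Proof.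
case: (coef_lb f) => Nf Hf; case: (coef_lb g) => Ng Hg.
exists (Order.min Nf Ng) => k; rewrite lt_min => /andP [h1 h2] /=.
by rewrite Hf // Hg // addr0.
Qed.
Definition ladd (f g : laurent) : laurent := Laurent (ladd_lb f g).

Lemma lopp_lb (f : laurent) :
  exists N : int, forall k : int, k < N -> (fun k => - f k) k = 0.
Proof.
case: (coef_lb f) => N H; exists N => k hk /=; by rewrite H // oppr0.
Qed.
Definition lopp (f : laurent) : laurent := Laurent (lopp_lb f).
Definition lsub (f g : laurent) : laurent := ladd f (lopp g).

(* multiplication by t : coefficient of t^k in t*f is the coefficient of t^(k-1) in f *)
Lemma lmult_lb (f : laurent) :
  exists N : int, forall k : int, k < N -> (fun k => f (k - 1)) k = 0.
Proof.
case: (coef_lb f) => N H; exists (N + 1) => k hk /=; apply: H; lia.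
Qed.
Definition lmult (f : laurent) : laurent := Laurent (lmult_lb f).

Lemma ldivt_lb (f : laurent) :
  exists N : int, forall k : int, k < N -> (fun k => f (k + 1)) k = 0.
Proof.
case: (coef_lb f) => N H; exists (N - 1) => k hk /=; apply: H; lia.
Qed.
Definition ldivt (f : laurent) : laurent := Laurent (ldivt_lb f).

(* t^n F_p[[t]] : the basic identity neighbourhoods of F_p((t)) *)
Definition lball (n : int) (f : laurent) : Prop := forall k : int, k < n -> f k = 0.
Definition in_power_series (f : laurent) : Prop := lball 0 f.

Variable d : nat.
Definition lvec := 'I_d -> laurent.
Definition vadd (x y : lvec) : lvec := fun i => ladd (x i) (y i).
Definition vopp (x : lvec) : lvec := fun i => lopp (x i).
Definition vsub (x y : lvec) : lvec := vadd x (vopp y).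
Definition vzero : lvec := fun _ => lzero.

Definition tau (x : lvec) : lvec := fun i => lmult (x i).
Definition tauinv (x : lvec) : lvec := fun i => ldivt (x i).

Definition vball (n : int) (x : lvec) : Prop := forall i, lball n (x i).

Definition vopen (S : lvec -> Prop) : Prop :=
  forall x, S x -> exists n : int, forall y, vball n (vsub y x) -> S y.
Definition vcompact (K : lvec -> Prop) : Prop :=
  forall (I : Type) (W : I -> lvec -> Prop), (forall i, vopen (W i)) ->
    (forall x, K x -> exists i, W i x) ->
    exists s : seq I, forall x, K x -> exists2 i, List.In i s & W i x.
Definition id_nbhd (U : lvec -> Prop) : Prop := exists n : int, forall x, vball n x -> U x.

Definition vsubgroup (V : lvec -> Prop) : Prop :=
  V vzero /\ (forall x y, V x -> V y -> V (vadd x y)) /\ (forall x, V x -> V (vopp x)).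
Definition compact_open_subgroup (V : lvec -> Prop) : Prop :=
  vsubgroup V /\ vopen V /\ vcompact V.

Definition vcontinuous (a : lvec -> lvec) : Prop :=
  forall x (n : int), exists m : int, forall y, vball m (vsub y x) -> vball n (vsub (a y) (a x)).

Definition is_aut (a : lvec -> lvec) : Prop :=
  (forall x y, a (vadd x y) = vadd (a x) (a y)) /\
  exists b : lvec -> lvec, cancel a b /\ cancel b a /\ vcontinuous a /\ vcontinuous b.

(* basic identity neighbourhood of the Braconnier topology:
   alpha(x) - x in U and alpha^-1(x) - x in U for all x in K *)
Definition braconnier_nbhd (K U : lvec -> Prop) (a : lvec -> lvec) : Prop :=
  forall x, K x -> U (vsub (a x) x) /\ (forall y, a y = x -> U (vsub y x)).

(* continuity of phi : F_p((t)) -> Aut(F_p((t))^d) for the Braconnier topology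
   (neighbourhoods of phi f0 are the translates phi f0 o N, N basic) *)
Definition braconnier_continuous (phi : laurent -> lvec -> lvec) : Prop :=
  forall (f0 : laurent) (K U : lvec -> Prop), vcompact K -> id_nbhd U ->
    exists n : int, forall f, lball n (lsub f f0) ->
      exists g : lvec -> lvec, is_aut g /\ braconnier_nbhd K U g /\
        forall x, phi f x = phi f0 (g x).

End Laurent.

(* Main.v *)
Require Import Defs.
From mathcomp Require Import all_boot all_order all_algebra zify.
From Stdlib Require Import Classical ProofIrrelevance FunctionalExtensionality IndefiniteDescription.
Set Implicit Arguments. Unset Strict Implicit. Unset Printing Implicit Defensive.
Import Order.TTheory GRing.Theory Num.Theory.
Local Open Scope ring_scope.

Lemma laurent_ext p (f g : laurent p) : (forall k, f k = g k) -> f = g.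
Proof.
case: f g => [cf hf] [cg hg] /= H.
have E : cf = cg by apply: functional_extensionality.
subst cg. by rewrite (proof_irrelevance _ hf hg).
Qed.

Section Compact.
Variables (p d : nat) (m : int).
Local Notation digit := {ffun 'I_d -> 'F_p}.
Definition upd (a : int -> digit) (k : int) (c : digit) : int -> digit :=
  fun j => if j == k then c else a j.
Definition Sset (a : int -> digit) (k : int) (y : lvec p d) : Prop :=
  vball m y /\ forall j, m <= j -> j < k -> forall i, y i j = a j i.
Variables (I : Type) (W : I -> lvec p d -> Prop).
Definition Good a k := exists s : seq I, forall y, Sset a k y -> exists2 i, List.In i s & W i y.

Lemma good_split a k : m <= k -> (forall c, Good (upd a k c) (k+1)) -> Good a k.
Proof.
move=> hmk H.
have gen : forall L : seq digit, exists s : seq I, forall y, Sset a k y ->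
    [ffun i => y i k] \in L -> exists2 i, List.In i s & W i y.
  elim=> [|c L [s2 H2]]; first by exists [::].
  case: (H c) => s1 H1. exists (s1 ++ s2) => y hy.
  rewrite inE => /orP [/eqP hc | hL].
  - case: (H1 y) => [|i hi hw].
      split; first by case: hy.
      move=> j hj1 hj2 i; rewrite /upd. case: eqP => [->|hne]; first by rewrite -hc ffunE.
      case: hy => _; apply => //; lia.
    exists i => //; apply List.in_or_app; by left.
  - case: (H2 y hy hL) => i hi hw; exists i => //; apply List.in_or_app; by right.
case: (gen (enum digit)) => s Hs; exists s => y hy; apply: Hs => //; by rewrite mem_enum.
Qed.

Lemma next_ex a k : exists c : digit, ~ Good a k -> m <= k -> ~ Good (upd a k c) (k+1).
Proof.
case: (classic (exists c, ~ Good (upd a k c) (k+1))) => [[c hc]|hno]; first by exists c.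
exists [ffun _ => 0] => hg hmk _; apply: hg; apply: good_split => // c.
apply: NNPP => hc; apply: hno; by exists c.
Qed.

Definition next a k : digit := proj1_sig (constructive_indefinite_description _ (next_ex a k)).
Lemma nextP a k : ~ Good a k -> m <= k -> ~ Good (upd a k (next a k)) (k+1).
Proof. rewrite /next; case: constructive_indefinite_description => c hc /=; exact hc. Qed.

Definition a0 : int -> digit := fun _ => [ffun _ => 0].
Fixpoint aseq (j : nat) : int -> digit :=
  match j with 0%N => a0 | j'.+1 => upd (aseq j') (m + j'%:Z) (next (aseq j') (m + j'%:Z)) end.

Lemma aseq_bad : ~ Good a0 m -> forall j, ~ Good (aseq j) (m + j%:Z).
Proof.
move=> h0; elim => [|j IH] /=; first by rewrite addr0.
have -> : m + (j.+1)%:Z = m + j%:Z + 1 by lia.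
apply: nextP => //; lia.
Qed.

Lemma aseq_agree j j' : (j <= j')%N -> forall l, l < m + j%:Z -> aseq j' l = aseq j l.
Proof.
elim: j' => [|j' IH] hj l hl.
  by move: hj; rewrite leqn0 => /eqP ->.
move: hj; rewrite leq_eqVlt => /orP [/eqP -> //| hlt].
rewrite /= /upd; case: eqP => [he|_]; first lia.
apply: IH => //; by rewrite -ltnS.
Qed.

Definition A (l : int) : digit := aseq (absz (l - m + 1)) l.
Lemma A_agree j l : m <= l -> l < m + j%:Z -> A l = aseq j l.
Proof. rewrite /A => h1 h2; symmetry; apply: aseq_agree; lia. Qed.

Lemma xinf_lb i : exists N : int, forall k : int, k < N ->
  (fun l => if l < m then 0 else A l i) k = 0.
Proof. exists m => k hk /=; by rewrite hk. Qed.
Definition xinf : lvec p d := fun i => Laurent (xinf_lb i).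

Lemma compact_aux : (forall i, vopen (W i)) -> (forall x, vball m x -> exists i, W i x) ->
  Good a0 m.
Proof.
move=> Wo Wc; apply: NNPP => hbad.
have hb := aseq_bad hbad.
have hx : vball m xinf by move=> i l hl /=; rewrite hl.
case: (Wc _ hx) => i hi. case: (Wo i _ hi) => n hn.
apply: (hb (absz (n - m))). exists [:: i] => y [hy1 hy2]. exists i; first by left.
apply: hn => i' l hl /=.
case: (boolP (l < m)) => hlm.
  by rewrite (hy1 i' l hlm) oppr0 addr0.
move: hlm; rewrite -leNgt => hlm.
rewrite (hy2 l hlm _ i'); last lia.
rewrite (@A_agree (absz (n - m))) ?subrr //; lia.
Qed.
End Compact.

Lemma vball_compact p d (m : int) : vcompact (@vball p d m).
Proof.
move=> I W Wo Wc; case: (compact_aux Wo Wc) => s hs; exists s => x hx.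
apply: hs; split => // j h1 h2; lia.
Qed.

Section Main.
Variables (p d : nat).
Implicit Types (x y : lvec p d) (f : laurent p).

Lemma lvec_ext x y : (forall i k, x i k = y i k) -> x = y.
Proof. move=> H; apply: functional_extensionality => i; apply: laurent_ext; exact: H. Qed.

Lemma vsub_ball m x y : vball m (vsub x y) -> vball m y -> vball m x.
Proof.
move=> H1 H2 i j hj; have := H1 i j hj; rewrite /= (H2 i j hj) oppr0 addr0; done.
Qed.

Lemma ball_open m : vopen (@vball p d m).
Proof. move=> x hx; exists m => y hy; exact: vsub_ball hy hx. Qed.

Lemma ball_subgroup m : vsubgroup (@vball p d m).
Proof.
split; first by [].
split.
  by move=> x y hx hy i j hj /=; rewrite hx // hy // addr0.
by move=> x hx i j hj /=; rewrite hx // oppr0.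
Qed.

Lemma tau_iter_coef k x i j : iter k (@tau p d) x i j = x i (j - k%:Z).
Proof.
elim: k j => [|k IH] j /=; first by rewrite subr0.
rewrite IH; congr (x i _); lia.
Qed.

Lemma lmult_iter_coef k f j : iter k (@lmult p) f j = f (j - k%:Z).
Proof.
elim: k j => [|k IH] j /=; first by rewrite subr0.
rewrite IH; congr (f _); lia.
Qed.

Lemma tauinv_tau x : tauinv (tau x) = x.
Proof. apply: lvec_ext => i j /=; congr (x i _); lia. Qed.

Lemma tauinv_tau_iter k x : iter k (@tauinv p d) (iter k (@tau p d) x) = x.
Proof.
elim: k x => [|k IH] x //.
by rewrite iterSr iterS tauinv_tau IH.
Qed.

Lemma tau_ball k j j' x : j' = j + k%:Z -> vball j x -> vball j' (iter k (@tau p d) x).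
Proof. move=> -> H i l hl; rewrite tau_iter_coef; apply: H; lia. Qed.

Lemma tau_ball_inv k j j' x : j' = j - k%:Z -> vball j (iter k (@tau p d) x) -> vball j' x.
Proof.
move=> -> H i l hl; have := H i (l + k%:Z); rewrite tau_iter_coef.
have -> : l + k%:Z - k%:Z = l by lia.
apply; lia.
Qed.

End Main.

Lemma phi_tau_iter p d (phi : laurent p -> lvec p d -> lvec p d)
  (phi_tau : forall f x, phi (lmult f) x = tau (phi f (tauinv x))) k f x :
  phi (iter k (@lmult p) f) x = iter k (@tau p d) (phi f (iter k (@tauinv p d) x)).
Proof.
elim: k x => [|k IH] x //.
by rewrite iterS phi_tau IH iterS iterSr.
Qed.

Theorem mainTheorem11 (p : nat) (hp : prime p) (d : nat) (hd : (0 < d)%N)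
  (phi : laurent p -> lvec p d -> lvec p d)
  (phi_aut : forall f, is_aut (phi f))
  (phi_hom : forall f g x, phi (ladd f g) x = phi f (phi g x))
  (phi_cont : braconnier_continuous phi)
  (phi_tau : forall f x, phi (lmult f) x = tau (phi f (tauinv x))) :
  exists V : lvec p d -> Prop,
    compact_open_subgroup V /\
    (forall f, in_power_series f ->
       forall y, V y <-> exists2 x, V x & phi f x = y) /\
    (forall x, V x -> V (tau x)) /\
    (exists x, V x /\ ~ exists2 y, V y & tau y = x).
Proof.
have phi0 : forall x, phi (lzero p) x = x.
  move=> x; case: (phi_aut (lzero p)) => _ [b [hb _]].
  have E : ladd (lzero p) (lzero p) = lzero p by apply: laurent_ext => k /=; rewrite addr0.
  have := phi_hom (lzero p) (lzero p) x; rewrite E => /(congr1 b); rewrite !hb; done.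
have B0 : id_nbhd (@vball p d 0) by exists 0.
case: (@phi_cont (lzero p) _ _ (@vball_compact p d 0) B0) => n Hn.
have Hg : forall f, lball n f -> exists g, braconnier_nbhd (@vball p d 0) (vball 0) g /\
    forall x, phi f x = g x.
  move=> f hf; case: (Hn f) => [j hj /=|g [_ [hg1 hg2]]].
    by rewrite (hf j hj) oppr0 addr0.
  exists g; split => // x; by rewrite hg2 phi0.
have Hfw : forall f, lball n f -> forall x, vball 0 x -> vball 0 (phi f x).
  move=> f hf x hx; case: (Hg f hf) => g [hg1 hg2]; rewrite hg2.
  case: (hg1 x hx) => h1 _; exact: vsub_ball h1 hx.
have Hbw : forall f, lball n f -> forall y, vball 0 (phi f y) -> vball 0 y.
  move=> f hf y hy; case: (Hg f hf) => g [hg1 hg2]; rewrite hg2 in hy.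
  case: (hg1 _ hy) => _ /(_ y erefl) h; exact: vsub_ball h hy.
pose k := absz n.
have hnk : n <= k%:Z by rewrite /k; lia.
have hgO : forall f, in_power_series f -> lball n (iter k (@lmult p) f).
  move=> f hf j hj; rewrite lmult_iter_coef; apply: hf; lia.
have fw : forall f, in_power_series f -> forall x, vball (- k%:Z) x -> vball (- k%:Z) (phi f x).
  move=> f hf x hx.
  have h1 : vball 0 (iter k (@tau p d) x) by apply: (tau_ball (j := - k%:Z)) => //; lia.
  have := Hfw _ (hgO f hf) _ h1; rewrite phi_tau_iter // tauinv_tau_iter.
  apply: tau_ball_inv; lia.
have bw : forall f, in_power_series f -> forall y, vball (- k%:Z) (phi f y) -> vball (- k%:Z) y.
  move=> f hf y hy.
  have h1 : vball 0 (phi (iter k (@lmult p) f) (iter k (@tau p d) y)).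
    rewrite phi_tau_iter // tauinv_tau_iter; apply: (tau_ball (j := - k%:Z)) => //; lia.
  have := Hbw _ (hgO f hf) _ h1; apply: tau_ball_inv; lia.
exists (vball (- k%:Z)).
split; first by split; [exact: ball_subgroup | split; [exact: ball_open | exact: vball_compact]].
split.
  move=> f hf y; split.
    move=> hy; case: (phi_aut f) => _ [b [_ [hb _]]].
    exists (b y); last by rewrite hb.
    by apply: (bw f hf); rewrite hb.
  by case=> x hx <-; apply: fw.
split.
  move=> x hx; apply: (tau_ball (k := 1) (j := - k%:Z - 1)); first lia.
  move=> i j hj; apply: hx; lia.
pose i0 : 'I_d := Ordinal hd.
have e_lb : exists N : int, forall j : int, j < N ->
    (fun j : int => if j == - k%:Z then (1 : 'F_p) else 0) j = 0.
  exists (- k%:Z) => j hj /=; case: eqP => // he; lia.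
pose e := Laurent e_lb.
pose x0 : lvec p d := fun i => if i == i0 then e else lzero p.
exists x0; split.
  move=> i j hj; rewrite /x0; case: (i == i0) => //=.
  case: eqP => // he; lia.
case=> y hy /(congr1 (fun z : lvec p d => z i0 (- k%:Z))).
rewrite /x0 eqxx /= eqxx hy; last lia.
move=> /eqP; rewrite eq_sym oner_eq0 //.
Qed.
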